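(* Let $X,Y$ be real Hilbert spaces and $T:X\to Y$ an injective bounded linear operator. Let $x^\dagger\in X$, $y^\dagger:=Tx^\dagger$, and $x_0\in X$. For $\alpha>0$ let $x_\alpha:=(T^*T+\alpha I)^{-1}(T^*y^\dagger+\alpha x_0)$, i.e. the unique minimizer over $x\in X$ of $\|y^\dagger-Tx\|^2+\alpha\|x-x_0\|^2$. Let $0\le\nu\le1$. Then $$N_\nu^{-1}\|x^\dagger-x_0\|_{\nu:1}\le\sup_{\alpha>0}\alpha^{-\nu}\|x^\dagger-x_\alpha\|\le\|x^\dagger-x_0\|_{\nu:1}.$$ Equalities hold for $\nu=0$ and $\nu=1$. If $\nu=1$, then $\sup_{\alpha>0}$ can be replaced by $\lim_{\alpha\searrow0}$.
   Context: $X_1:=\mathrm{range}(T^*T)$ with norm $\|x\|_1:=\|(T^*T)^{-1}x\|$. For $x\in X$ and $t>0$, $K_t(x):=\inf_{x_1\in X_1}\big(\|x-x_1\|^2+t^2\|x_1\|_1^2\big)^{1/2}$, and for $0\le\nu\le1$, $\|x\|_{\nu:1}:=\sup_{t>0}t^{-\nu}K_t(x)\in[0,\infty]$. For $0<\nu<1$, $N_\nu:=\big(\nu^\nu(1-\nu)^{1-\nu}\big)^{-1/2}$, and $N_0:=N_1:=1$. *)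

(* Defs.v *)
From HB Require Import structures.
From mathcomp Require Import all_boot all_order all_algebra.
From mathcomp Require Import all_classical all_reals all_analysis.
Set Implicit Arguments. Unset Strict Implicit. Unset Printing Implicit Defensive.
Import Order.TTheory GRing.Theory Num.Theory.
Import numFieldNormedType.Exports.
Local Open Scope classical_set_scope.
Local Open Scope ring_scope.

(* ip is an inner product on V inducing the norm of V; a complete normed
   module with such an inner product is a real Hilbert space. *)
Definition is_inner_product (R : realType) (V : normedModType R)
    (ip : V -> V -> R) : Prop :=
  (forall x y, ip x y = ip y x) /\
  (forall (a : R) (x y z : V), ip (a *: x + y) z = a * ip x z + ip y z) /\
  (forall x, ip x x = `|x| ^+ 2).

Definition is_adjoint (R : realType) (X Y : normedModType R)
    (ipX : X -> X -> R) (ipY : Y -> Y -> R) (T : X -> Y) (Ts : Y -> X) : Prop :=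
  forall x y, ipY (T x) y = ipX x (Ts y).

(* K-functional: K_t(x) = inf_{x1 in range(T*T)} (|x-x1|^2 + t^2 |x1|_1^2)^(1/2)
   with |x1|_1 = |(T*T)^{-1} x1|; x1 is parametrised as x1 = T*T z, so
   |x1|_1 = |z| (T*T is injective since T is). *)
Definition Kfun (R : realType) (X Y : normedModType R)
    (T : X -> Y) (Ts : Y -> X) (t : R) (x : X) : R :=
  inf [set Num.sqrt (`|x - Ts (T z)| ^+ 2 + t ^+ 2 * `|z| ^+ 2) | z in [set: X]].

Definition interp_norm (R : realType) (X Y : normedModType R)
    (T : X -> Y) (Ts : Y -> X) (nu : R) (x : X) : \bar R :=
  ereal_sup [set ((t `^ (- nu)) * Kfun T Ts t x)%:E | t in `]0, +oo[%classic].

Definition Nnu (R : realType) (nu : R) : R :=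
  if (0 < nu) && (nu < 1)
  then ((nu `^ nu) * ((1 - nu) `^ (1 - nu))) `^ (- (2^-1))
  else 1.

(* Main.v *)
Require Import Defs.
From HB Require Import structures.
From mathcomp Require Import all_boot all_order all_algebra.
From mathcomp Require Import all_classical all_reals all_analysis.
From mathcomp Require Import lra ring.
Import Order.TTheory GRing.Theory Num.Theory.
Import numFieldNormedType.Exports.
Local Open Scope classical_set_scope.
Local Open Scope ring_scope.

Module Helpers.
Set Implicit Arguments. Unset Strict Implicit.


Lemma ip0l (R : realType) (V : normedModType R) (ip : V -> V -> R) :
  is_inner_product ip -> forall z, ip 0 z = 0.
Proof.
move=> [hC [hL hN]] z; have := hL 1 0 0 z.
rewrite scale1r addr0 mul1r; lra.
Qed.

Lemma ipDl (R : realType) (V : normedModType R) (ip : V -> V -> R) :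
  is_inner_product ip -> forall x y z, ip (x + y) z = ip x z + ip y z.
Proof. by move=> [hC [hL hN]] x y z; rewrite -[x]scale1r hL mul1r scale1r. Qed.

Lemma ipZl (R : realType) (V : normedModType R) (ip : V -> V -> R) :
  is_inner_product ip -> forall a x z, ip (a *: x) z = a * ip x z.
Proof.
move=> h a x z; have := h => [[hC [hL hN]]].
by rewrite -[a *: x]addr0 hL ip0l // addr0.
Qed.

Lemma ipNl (R : realType) (V : normedModType R) (ip : V -> V -> R) :
  is_inner_product ip -> forall x z, ip (- x) z = - ip x z.
Proof. by move=> h x z; rewrite -scaleN1r ipZl // mulN1r. Qed.

Lemma ipDr (R : realType) (V : normedModType R) (ip : V -> V -> R) :
  is_inner_product ip -> forall x y z, ip z (x + y) = ip z x + ip z y.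
Proof. move=> h x y z; have := h => [[hC _]]; by rewrite !(hC z) ipDl. Qed.

Lemma ipZr (R : realType) (V : normedModType R) (ip : V -> V -> R) :
  is_inner_product ip -> forall a x z, ip z (a *: x) = a * ip z x.
Proof. move=> h a x z; have := h => [[hC _]]; by rewrite !(hC z) ipZl. Qed.

Lemma ipNr (R : realType) (V : normedModType R) (ip : V -> V -> R) :
  is_inner_product ip -> forall x z, ip z (- x) = - ip z x.
Proof. move=> h x z; have := h => [[hC _]]; by rewrite !(hC z) ipNl. Qed.

Lemma ipxx (R : realType) (V : normedModType R) (ip : V -> V -> R) :
  is_inner_product ip -> forall x, ip x x = `|x| ^+ 2.
Proof. by move=> [_ [_ h]] x; exact: h. Qed.


Lemma expand_id (R : realType) (V : normedModType R) (ip : V -> V -> R) :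
  is_inner_product ip -> forall (al : R) r B w, al != 0 ->
  ip (r + B) (r + B) + al ^+ 2 * ip (al^-1 *: r - w) (al^-1 *: r - w) - ip r r
  = ip (r + B - al *: w) (r + B - al *: w) + 2 * al * ip B w.
Proof.
move=> h al r B w al0; have := h => [[hC _]].
rewrite !(ipDl h, ipDr h, ipNl h, ipNr h, ipZl h, ipZr h).
rewrite (hC B r) (hC w r) (hC w B).
by field.
Qed.

Definition islin (R : realType) (V : normedModType R) (A : V -> V) :=
  forall (a : R) x y, A (a *: x + y) = a *: A x + A y.

Lemma lin0 (R : realType) (V : normedModType R) (A : V -> V) : islin A -> A 0 = 0.
Proof. move=> h; have := h 1 0 0; rewrite !scale1r addr0.
by move=> /(congr1 (fun t => t - A 0)); rewrite subrr addrK => <-. Qed.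

Lemma linD (R : realType) (V : normedModType R) (A : V -> V) : islin A ->
  forall x y, A (x + y) = A x + A y.
Proof. by move=> h x y; have := h 1 x y; rewrite !scale1r. Qed.

Lemma linZ (R : realType) (V : normedModType R) (A : V -> V) : islin A ->
  forall (a : R) x, A (a *: x) = a *: A x.
Proof. by move=> h a x; have := h a x 0; rewrite (lin0 h) !addr0. Qed.

Lemma linN (R : realType) (V : normedModType R) (A : V -> V) : islin A ->
  forall x, A (- x) = - A x.
Proof. by move=> h x; rewrite -scaleN1r linZ // scaleN1r. Qed.

Lemma linB (R : realType) (V : normedModType R) (A : V -> V) : islin A ->
  forall x y, A (x - y) = A x - A y.
Proof. by move=> h x y; rewrite linD // linN. Qed.

Lemma up_ineq (R : realType) (V : normedModType R) (ip : V -> V -> R) :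
  is_inner_product ip -> forall (A : V -> V), islin A ->
  (forall w, 0 <= ip (A w) w) -> forall (al : R) e r, 0 < al ->
  A r + al *: r = al *: e -> forall z,
  `|r| ^+ 2 <= `|e - A z| ^+ 2 + al ^+ 2 * `|z| ^+ 2.
Proof.
move=> h A hA Ap al e r al0 H z.
set w := al^-1 *: r - z.
have Ez : z = al^-1 *: r - w by rewrite /w opprB addrCA subrr addr0.
have EA : A r = al *: e - al *: r by rewrite -H addrK.
have Ee : e - A z = r + A w.
  rewrite /w linB // linZ // EA scalerBr !scalerA mulVf ?gt_eqF // !scale1r.
  by rewrite addrA [r + _]addrCA subrr addr0.
rewrite Ee Ez -!(ipxx h).
rewrite -subr_ge0 expand_id ?gt_eqF //.
apply: addr_ge0; first by rewrite ipxx // exprn_ge0.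
by apply: mulr_ge0 => //; apply: mulr_ge0 => //; apply: ltW.
Qed.

Lemma low_eq (R : realType) (V : normedModType R) (A : V -> V) :
  islin A -> forall (al : R) e r, 0 < al ->
  A r + al *: r = al *: e -> e - A (al^-1 *: r) = r.
Proof.
move=> hA al e r al0 H.
have EA : A r = al *: e - al *: r by rewrite -H addrK.
rewrite linZ // EA scalerBr !scalerA mulVf ?gt_eqF // !scale1r.
by rewrite opprB addrC subrK.
Qed.

Lemma mono (R : realType) (V : normedModType R) (ip : V -> V -> R) :
  is_inner_product ip -> forall (A : V -> V), islin A ->
  (forall w, 0 <= ip (A w) w) -> forall (a b : R) e u v, 0 < b -> b < a ->
  A u + a *: u = e -> A v + b *: v = e -> `|u| <= `|v|.
Proof.
move=> h A hA Ap a b e u v b0 ba Hu Hv.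
set d := v - u.
have Ed : A d + b *: d = (a - b) *: u.
  rewrite /d linB // scalerBr scalerBl.
  have -> : A v - A u + (b *: v - b *: u) = (A v + b *: v) - (A u + b *: u).
    by rewrite opprD !addrA; congr (_ + _); rewrite addrAC.
  by rewrite Hv -Hu opprD addrACA subrr add0r.
have : ip (A d + b *: d) d = ip ((a - b) *: u) d by rewrite Ed.
rewrite (ipDl h) !(ipZl h) => E.
have hud : 0 <= (a - b) * ip u d.
  by rewrite -E; apply: addr_ge0 => //; apply: mulr_ge0; [exact: ltW | rewrite ipxx // exprn_ge0].
have Ev : v = u + d by rewrite /d addrC subrK.
clearbody d.
have ab : 0 < a - b by rewrite subr_gt0.
have hud' : 0 <= ip u d by rewrite -(pmulr_rge0 _ ab).
have := h => [[hC _]].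
rewrite -(@ler_pXn2r _ 2) ?nnegrE ?normr_ge0 //.
rewrite -!(ipxx h) Ev.
rewrite !(ipDl h, ipDr h).
have : 0 <= ip d d by rewrite ipxx // exprn_ge0.
rewrite (hC d u); lra.
Qed.


Lemma sqrt_add_le (R : realType) (x y : R) : 0 <= x -> 0 <= y ->
  Num.sqrt (x ^+ 2 + y ^+ 2) <= x + y.
Proof.
move=> x0 y0; apply: (le_trans (y := Num.sqrt ((x + y) ^+ 2))).
  by apply: ler_wsqrtr; nra.
by rewrite sqrtr_sqr ger0_norm //; lra.
Qed.

Lemma key_id (R : realType) (nu : R) : 0 < nu -> nu < 1 ->
  ((1 - nu) / nu) `^ (2^-1) `^ nu * Num.sqrt (1 + (((1 - nu) / nu) `^ (2^-1))^-2)
  = ((nu `^ nu) * ((1 - nu) `^ (1 - nu))) `^ (- (2^-1)).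
Proof.
move=> n0 n1.
have q0 : 0 < (1 - nu) / nu by apply: divr_gt0; lra.
rewrite powR12_sqrt ?ltW //.
have -> : 1 + (Num.sqrt ((1 - nu) / nu))^-2 = (1 - nu)^-1.
  rewrite sqr_sqrtr ?ltW // invf_div; field; lra.
rewrite powRN -powR12_sqrt ?ltW // -powR12_sqrt ?invr_ge0 ?subr_ge0 ?ltW //.
rewrite powRAC -powRM ?powR_ge0 ?invr_ge0 ?subr_ge0 ?ltW //.
apply: (@mulIf _ ((nu `^ nu * (1 - nu) `^ (1 - nu)) `^ 2^-1)).
  by rewrite gt_eqF // powR_gt0 // mulr_gt0 // powR_gt0 //; lra.
rewrite mulVf; last by rewrite gt_eqF // powR_gt0 // mulr_gt0 // powR_gt0 //; lra.
rewrite -powRM ?mulr_ge0 ?powR_ge0 ?invr_ge0 ?subr_ge0 ?ltW //.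
have -> : ((1 - nu) / nu) `^ nu * (1 - nu)^-1 * (nu `^ nu * (1 - nu) `^ (1 - nu))
   = (((1 - nu) / nu) `^ nu * nu `^ nu) * (1 - nu) `^ (1 - nu) * (1 - nu)^-1.
  by ring.
rewrite -powRM ?ltW //.
rewrite divfK ?gt_eqF //.
rewrite -powRD; last by apply/implyP => /eqP; lra.
rewrite addrCA subrr addr0 powRr1 ?subr_ge0 ?ltW // mulfV ?gt_eqF; last lra.
  by rewrite powR1.
by [].
Qed.

Lemma core (R : realType) (nu : R) (K rs : R -> R) (s : R) :
  0 <= nu <= 1 -> (forall a, 0 <= rs a) ->
  (forall t a, 0 < t -> 0 < a ->
     K t <= Num.sqrt (rs a ^+ 2 + t ^+ 2 * (a^-1 * rs a) ^+ 2)) ->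
  (forall a, 0 < a -> a `^ (- nu) * rs a <= s) ->
  forall t, 0 < t -> t `^ (- nu) * K t <= Nnu nu * s.
Proof.
move=> /andP[n0 n1] rs0 HK Hs t t0.
have s0 : 0 <= s.
  by apply: le_trans (Hs 1 ltr01); rewrite mulr_ge0 ?powR_ge0.
have HK' : forall a, 0 < a -> K t <= rs a + t * (a^-1 * rs a).
  move=> a a0; apply: le_trans (HK t a t0 a0) _; rewrite -exprMn.
  apply: sqrt_add_le => //; apply: mulr_ge0; first exact: ltW.
  by apply: mulr_ge0 => //; rewrite invr_ge0 ltW.
have [nu0|nz] := eqVneq nu 0.
  subst nu.
  rewrite /Nnu ltxx /= oppr0 powRr0 !mul1r.
  apply/ler_addgt0Pr => ep ep0.
  have q0 : 0 < ep / (s + 1) by apply: divr_gt0 => //; lra.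
  set q := ep / (s + 1).
  have hq : q * (s + 1) = ep by rewrite /q divfK // gt_eqF //; lra.
  set a := t * (s + 1) / ep.
  have a0 : 0 < a by rewrite /a divr_gt0 // mulr_gt0 //; lra.
  have ha : t * a^-1 = q.
    rewrite /a /q; field.
    by rewrite !gt_eqF //; lra.
  have := Hs a a0; rewrite oppr0 powRr0 mul1r => hr.
  apply: le_trans (HK' a a0) _.
  rewrite mulrA ha.
  have := rs0 a; nra.
have [nu1|n1'] := eqVneq nu 1.
  subst nu.
  rewrite /Nnu ltxx andbF mul1r powR_inv1 ?(ltW t0) // ler_pdivrMl //.
  apply/ler_addgt0Pr => ep ep0.
  have a0 : 0 < ep / (s + 1) by apply: divr_gt0 => //; lra.
  set a := ep / (s + 1).
  have hq : a * (s + 1) = ep by rewrite /a divfK // gt_eqF //; lra.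
  have := Hs a a0; rewrite powR_inv1 ?(ltW a0) // => hr0.
  have hr := hr0; rewrite ler_pdivrMl // in hr.
  apply: le_trans (HK' a a0) _.
  have h2 : t * (a^-1 * rs a) <= t * s.
    by apply: ler_wpM2l; [exact: ltW | exact: hr0].
  nra.
have n0' : 0 < nu by rewrite lt_neqAle eq_sym nz.
have n1'' : nu < 1 by rewrite lt_neqAle n1' n1.
rewrite /Nnu n0' n1'' /= -key_id //.
have q0 : 0 < (1 - nu) / nu by apply: divr_gt0; lra.
set c := ((1 - nu) / nu) `^ (2^-1).
have c0 : 0 < c by apply: powR_gt0.
set M := Num.sqrt (1 + c^-2).
have a0 : 0 < t * c by apply: mulr_gt0.
have := Hs _ a0; rewrite powRN ler_pdivrMl ?powR_gt0 // => hr.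
have HKa : K t <= rs (t * c) * M.
  apply: le_trans (HK t _ t0 a0) _.
  have -> : rs (t * c) ^+ 2 + t ^+ 2 * ((t * c)^-1 * rs (t * c)) ^+ 2
     = rs (t * c) ^+ 2 * (1 + c^-2).
    by field; rewrite ?gt_eqF.
  by rewrite sqrtrM ?exprn_ge0 // sqrtr_sqr ger0_norm.
have M0 : 0 <= M by apply: sqrtr_ge0.
apply: le_trans (ler_wpM2l (powR_ge0 _ _) HKa) _.
apply: le_trans (ler_wpM2l (powR_ge0 _ _) (ler_wpM2r M0 hr)) _.
have tn0 : 0 < t `^ nu by apply: powR_gt0.
rewrite powRM ?(ltW t0) ?(ltW c0) // powRN.
rewrite le_eqVlt; apply/orP; left; apply/eqP; field.
by rewrite gt_eqF.
Qed.
Lemma ab_id (V : zmodType) (p q s t : V) : p - (p + q - s) + (t - s) = t - q.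
Proof.
rewrite opprB addrA (addrC p) -addrA (addrC p) (addrC _ (t - s)) !addrA subrK.
by rewrite opprD addrA subrK.
Qed.

End Helpers.
Import Helpers.

Theorem proposition3 (R : realType) (X Y : completeNormedModType R)
    (ipX : X -> X -> R) (ipY : Y -> Y -> R)
    (T : {linear X -> Y}) (Ts : Y -> X)
    (xd x0 : X) (xa : R -> X) (nu : R) :
  is_inner_product ipX -> is_inner_product ipY ->
  continuous T -> injective T ->
  is_adjoint ipX ipY T Ts ->
  (forall a : R, 0 < a -> Ts (T (xa a)) + a *: xa a = Ts (T xd) + a *: x0) ->
  0 <= nu <= 1 ->
  let S := ereal_sup [set ((a `^ (- nu)) * `|xd - xa a|)%:E
                     | a in `]0, +oo[%classic] in
  let Nx := interp_norm T Ts nu (xd - x0) in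
  [/\ ((Nnu nu)^-1)%:E * Nx <= S, S <= Nx,
      (nu = 0%R \/ nu = 1%R -> S = Nx) &
      (nu = 1%R -> (fun a => ((a ^-1) * `|xd - xa a|)%:E) x @[x --> 0^'+] --> Nx)]%E.
Proof.
move=> hX hY Tc Ti Hadj Hxa hnu S Nx.
have [hCX [hLX hNX]] := hX.
have TsL : forall (a : R) y1 y2, Ts (a *: y1 + y2) = a *: Ts y1 + Ts y2.
  move=> a y1 y2; apply/eqP; rewrite -subr_eq0; set D := _ - _.
  have E : forall x, ipX x D = 0.
    move=> x; rewrite /D !(ipDr hX, ipNr hX, ipZr hX) -!Hadj.
    rewrite !(ipDr hY, ipZr hY); ring.
  by have := E D; rewrite ipxx // => /eqP; rewrite sqrf_eq0 normr_eq0.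
pose A := fun x => Ts (T x).
have hA : islin A by move=> a x y; rewrite /A linearP TsL.
have Ap : forall w, 0 <= ipX (A w) w.
  by move=> w; rewrite /A hCX -Hadj (ipxx hY) exprn_ge0.
set e := xd - x0.
have Hr : forall a, 0 < a -> A (xd - xa a) + a *: (xd - xa a) = a *: e.
  move=> a a0; have H := Hxa a a0.
  rewrite linB // {1 2}/A.
  have -> : Ts (T (xa a)) = Ts (T xd) + a *: x0 - a *: xa a by rewrite -H addrK.
  by rewrite /e !scalerBr ab_id.
have pos : forall a : R, `]0, +oo[%classic a -> 0 < a.
  by move=> a; rewrite /= in_itv /= andbT.
have posI : forall a : R, 0 < a -> `]0, +oo[%classic a.
  by move=> a a0; rewrite /= in_itv /= andbT.
set K := fun t => Kfun T Ts t e.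
set rs := fun a => `|xd - xa a|.
have Klb : forall t : R, has_lbound
   [set Num.sqrt (`|e - Ts (T z)| ^+ 2 + t ^+ 2 * `|z| ^+ 2) | z in [set: X]].
  by move=> t; exists 0 => _ [z _ <-]; apply: sqrtr_ge0.
have Kup : forall a : R, 0 < a -> rs a <= K a.
  move=> a a0; rewrite /K /Kfun; apply: lb_le_inf.
    by eexists; exists 0.
  move=> _ [z _ <-]; rewrite /rs -[`|xd - xa a|]normr_id -sqrtr_sqr.
  apply: ler_wsqrtr; exact: (up_ineq hX hA Ap a0 (Hr a a0) z).
have Klow : forall t a : R, 0 < t -> 0 < a ->
    K t <= Num.sqrt (rs a ^+ 2 + t ^+ 2 * (a^-1 * rs a) ^+ 2).
  move=> t a t0 a0; rewrite /K /Kfun.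
  apply: (ge_inf (Klb t)); exists (a^-1 *: (xd - xa a)) => //.
  have := low_eq hA a0 (Hr a a0); rewrite /A => ->.
  by rewrite normrZ gtr0_norm ?invr_gt0.
have Hu : forall a : R, 0 < a -> A (a^-1 *: (xd - xa a)) + a *: (a^-1 *: (xd - xa a)) = e.
  move=> a a0; rewrite (linZ hA) scalerA mulfV ?gt_eqF // scale1r.
  have := congr1 (fun v => a^-1 *: v) (Hr a a0).
  by rewrite /= scalerDr !scalerA mulVf ?gt_eqF // !scale1r.
have P4 : nu = 1 -> (fun a => ((a ^-1) * `|xd - xa a|)%:E) x @[x --> 0^'+] --> S.
  move=> nu1.
  have -> : S = ereal_sup ((fun a => ((a ^-1) * `|xd - xa a|)%:E) @`
                 [set` Interval (BRight (0:R)) (BInfty _ false)]).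
    rewrite /S nu1; congr ereal_sup; apply: eq_imagel => a /= ha.
    by rewrite powR_inv1 // ltW // (pos a).
  apply: nonincreasing_at_right_cvge => //.
  move=> x y hx hy xy; rewrite lee_fin.
  have x0' : 0 < x by apply: pos.
  have y0' : 0 < y by apply: pos.
  have [exy|nxy] := eqVneq x y; first by rewrite exy.
  have xy' : x < y by rewrite lt_neqAle nxy xy.
  have := mono hX hA Ap x0' xy' (Hu y y0') (Hu x x0').
  by rewrite !normrZ !gtr0_norm ?invr_gt0.
have HSub : forall a : R, 0 < a -> (((a `^ (- nu)) * rs a)%:E <= S)%E.
  by move=> a a0; apply: ereal_sup_ubound; exists a => //; apply: posI.
have HNub : forall t : R, 0 < t -> (((t `^ (- nu)) * K t)%:E <= Nx)%E.
  by move=> t t0; apply: ereal_sup_ubound; exists t => //; apply: posI.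
have P2 : (S <= Nx)%E.
  apply: ge_ereal_sup => _ [a /pos a0 <-].
  apply: le_trans (HNub a a0); rewrite lee_fin ler_wpM2l ?powR_ge0 //.
  exact: Kup.
have N0 : 0 < Nnu nu.
  rewrite /Nnu; case: ifPn => [/andP[na nb]|_]; last exact: ltr01.
  by apply: powR_gt0; apply: mulr_gt0; apply: powR_gt0; lra.
have P1 : (((Nnu nu)^-1)%:E * Nx <= S)%E.
  case HS : S => [s||]; last 2 first.
  - exact: leey.
  - by have := HSub 1 ltr01; rewrite HS leeNy_eq.
  have Hs : forall a, 0 < a -> a `^ (- nu) * rs a <= s.
    by move=> a a0; have := HSub a a0; rewrite HS lee_fin.
  have HN : (Nx <= (Nnu nu * s)%:E)%E.
    apply: ge_ereal_sup => _ [t /pos t0 <-]; rewrite lee_fin.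
    exact: (@core R nu K rs s hnu (fun a => normr_ge0 _) Klow Hs t t0).
  apply: le_trans (lee_wpmul2l _ HN) _; first by rewrite lee_fin invr_ge0 ltW.
  by rewrite -EFinM mulrA mulVf ?gt_eqF // mul1r.
have P3 : nu = 0 \/ nu = 1 -> S = Nx.
  move=> hn; have N1 : Nnu nu = 1.
    by rewrite /Nnu; case: hn => ->; rewrite ltxx ?andbF.
  apply/eqP; rewrite eq_le P2 /=.
  by move: P1; rewrite N1 invr1 mul1e.
split => //.
by move=> nu1; rewrite -P3; [exact: P4 | right].
Qed.
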